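(* Fix $p\in(0,1)$, $q=1-p$. Let $\nu_n$ be the stationary law of the careless count chain and $\mu_n:=\mathbb P_{\nu_n}(K_0<n,K_1=n)$. Then $\mu_n=\nu_n(n)(1-q^n)$, and equivalently $\mu_n=\nu_n(n-1)\frac{q^n}{n}$.
   Context: The careless count chain $(K_t)$ on $\{0,\dots,n\}$: given $K_t=k$, with probability $k/n$, $K_{t+1}\sim\mathrm{Bin}(k,q)$, and with probability $(n-k)/n$, $K_{t+1}\sim\mathrm{Bin}(k+1,q)$. It is irreducible and aperiodic with unique stationary law $\nu_n$; $\mathbb P_{\nu_n}$ denotes the chain started from $\nu_n$. *)

(* Defs.v *)
From HB Require Import structures.
From mathcomp Require Import all_boot all_order all_algebra.
Unset Printing Implicit Defensive.
Import Order.TTheory GRing.Theory Num.Theory.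
Local Open Scope ring_scope.

Definition binom_pmf (R : realFieldType) (m : nat) (q : R) (j : nat) : R :=
  ('C(m, j))%:R * q ^+ j * (1 - q) ^+ (m - j).

Definition careless_P (R : realFieldType) (n : nat) (q : R)
    (k j : 'I_n.+1) : R :=
  (k%:R / n%:R) * binom_pmf R k q j
  + ((n - k)%:R / n%:R) * binom_pmf R k.+1 q j.

Definition stationary_law (R : realFieldType) (n : nat) (q : R)
    (nu : 'I_n.+1 -> R) : Prop :=
  (forall i, 0 <= nu i) /\ (\sum_i nu i = 1) /\
  (forall j, nu j = \sum_i nu i * careless_P R n q i j).

Definition two_step_prob (R : realFieldType) (n : nat) (q : R)
    (nu : 'I_n.+1 -> R) (A B : pred 'I_n.+1) : R :=
  \sum_(i | A i) \sum_(j | B j) nu i * careless_P R n q i j.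

(* Main.v *)
Require Import Defs.
From HB Require Import structures.
From mathcomp Require Import all_boot all_order all_algebra.
From mathcomp Require Import zify.
Import Order.TTheory GRing.Theory Num.Theory.
Local Open Scope ring_scope.

Lemma Pval (R : realFieldType) (n : nat) (q : R) (hn : (0 < n)%N) (i : 'I_n.+1) :
  careless_P R n q i ord_max =
  if (i : nat) == n then q ^+ n else if (i : nat) == n.-1 then q ^+ n / n%:R else 0.
Proof.
rewrite /careless_P /binom_pmf /=.
have hn0 : (n%:R : R) != 0 by rewrite pnatr_eq0 -lt0n.
have := ltn_ord i; rewrite ltnS leq_eqVlt => /orP [/eqP ->|hi].
  by rewrite eqxx binn subnn !expr0 mulr1 mul1r divff // mul1r !mul0r addr0.
rewrite (ltn_eqF hi) bin_small // !mul0r mulr0 add0r.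
case: eqP => [hin|hin].
  have -> : i.+1 = n by rewrite hin prednK.
  rewrite binn subnn expr0 mulr1 mul1r.
  have -> : (n - i)%N = 1%N by rewrite hin; case: (n) hn => // m _; rewrite subSnn.
  by rewrite div1r mulrC.
have hi2 : (i.+1 < n)%N.
  by move: hi hin; lia.
by rewrite bin_small // !mul0r mulr0.
Qed.

Theorem mainTheorem15 (R : realFieldType) (n : nat) (p : R)
  (hn : (0 < n)%N) (hp0 : 0 < p) (hp1 : p < 1) (nu : 'I_n.+1 -> R) :
  let q := 1 - p in
  stationary_law R n q nu ->
  let mu := two_step_prob R n q nu (fun k : 'I_n.+1 => (k < n)%N)
                                 (fun k : 'I_n.+1 => k == n :> nat) in
  mu = nu ord_max * (1 - q ^+ n) /\
  mu = nu (inord n.-1) * (q ^+ n / n%:R).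
Proof.
move=> q [_ [_ hst]] mu.
have hin : (inord n.-1 : 'I_n.+1) = n.-1 :> nat by rewrite inordK // ltnS leq_pred.
have hneq : (n.-1 == n) = false by rewrite ltn_eqF // prednK.
have Hmu : mu = nu (inord n.-1) * (q ^+ n / n%:R).
  rewrite /mu /two_step_prob.
  under eq_bigr => i _ do rewrite (big_pred1 ord_max) //.
  rewrite (bigD1 (inord n.-1)) /=; last by rewrite hin prednK.
  rewrite Pval // hin hneq eqxx big1 ?addr0 // => i /andP [hi hi2].
  rewrite Pval // (ltn_eqF hi) ifF ?mulr0 //.
  apply/negP => /eqP h; move/negP: hi2; apply; apply/eqP; apply: val_inj.
  by rewrite /= hin.
split => //.
have := hst ord_max.
rewrite (bigD1 ord_max) //= Pval // eqxx.
have -> : \sum_(i < n.+1 | i != ord_max) nu i * careless_P R n q i ord_max = mu.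
  rewrite Hmu (bigD1 (inord n.-1)) /=; last first.
    by rewrite -val_eqE /= hin hneq.
  rewrite Pval // hin hneq eqxx big1 ?addr0 // => i /andP [hi hi2].
  rewrite Pval // ifF; last first.
    by apply/negP => /eqP h; move/negP: hi; apply; rewrite -val_eqE /= h.
  rewrite ifF ?mulr0 //.
  apply/negP => /eqP h; move/negP: hi2; apply; apply/eqP; apply: val_inj.
  by rewrite /= hin.
move=> h; rewrite mulrBr mulr1; apply/eqP; rewrite eq_sym subr_eq; apply/eqP.
by rewrite {1}h addrC.
Qed.
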